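(* Let $m<n$ be positive integers with $m\mid n$, $d=n/m$, and regard $\mathrm{GL}(m)\subset\mathrm{GL}(n)$ via $x\mapsto\mathrm{diag}(x,\dots,x)$ ($d$ blocks), acting on $V=\mathbb C^n$ with standard basis $e_1,\dots,e_n$ (so $e_1,\dots,e_m$ is a basis of $W=\mathbb C^m$). Let $\alpha:\{1,\dots,n\}\to\{1,\dots,p\}$ be surjective and $P=\mathrm{Stab}_{\mathrm{GL}(n)}(\mathcal F_\alpha)$, where $\mathcal F_\alpha=\{\langle e_i:\alpha(i)\le j\rangle\}_{j=1}^{p-1}$. Define $\beta:\{1,\dots,m\}\to\{1,\dots,p\}^d$ by $\beta(r)=(\alpha(r),\alpha(m+r),\dots,\alpha((d-1)m+r))$, let $\mathcal I$ be its image, and let $\le$ be the componentwise partial order on $\{1,\dots,p\}^d$. (a) $Q:=P\cap\mathrm{GL}(m)$ is a parabolic subgroup of $\mathrm{GL}(m)$ if and only if $\le$ restricts to a total order on $\mathcal I$. Moreover, in that case, writing $\mathcal I=\{b_1<\dots<b_q\}$, we have $Q=\mathrm{Stab}_{\mathrm{GL}(m)}(\mathcal F_\beta)$ with $\mathcal F_\beta=\{\langle e_i:\beta(i)\le b_j\rangle\}_{j=1}^{q-1}$; in particular, with $d_j=\#\beta^{-1}(\{b_1,\dots,b_j\})$, $\mathrm{GL}(m)/Q$ is identified with $\mathrm{Fl}(d_1,\dots,d_{q-1};W)$. (b) If $Q$ is parabolic, then the unipotent radicals satisfy $U_Q\subset U_P$ if and only if any two distinct elements $(x_1,\dots,x_d),(y_1,\dots,y_d)$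 of $\mathcal I$ satisfy $x_i\neq y_i$ for all $i\in\{1,\dots,d\}$.
   Context: $\mathrm{Fl}(d_1,\dots,d_{q-1};W)$ denotes the variety of flags $F_1\subset\dots\subset F_{q-1}$ of subspaces of $W$ with $\dim F_j=d_j$. *)

(* Defs.v *)
From HB Require Import structures.
From mathcomp Require Import all_boot all_order all_algebra.
From mathcomp Require Import reals complex mxtens.
Set Implicit Arguments. Unset Strict Implicit. Unset Printing Implicit Defensive.
Import Order.TTheory GRing.Theory Num.Theory.
Local Open Scope ring_scope.

Section Defs.
Variable F : fieldType.

(* "GL(m) ⊂ GL(n)", x ↦ diag(x,...,x) (d blocks) = I_d ⊗ x ; the index of  *)
(* (block k, position r) is mxtens_index (k, r) = k*m + r.                 *)
Definition blockdiag (d m : nat) (x : 'M[F]_m) : 'M[F]_(d * m) :=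
  (1%:M : 'M[F]_d) *t x.

Definition coord_span (n : nat) (P : pred 'I_n) : 'M[F]_n :=
  \matrix_(i, k) (((P i) && (i == k))%:R : F).

(* g (invertible) stabilizes the subspace S, for the usual action g·v on   *)
(* column vectors; in terms of row spaces this reads S g^T = S.            *)
Definition stabilizes (n : nat) (g : 'M[F]_n) (S : 'M[F]_n) : bool :=
  ((S *m g^T) == S)%MS.

(* F_alpha = { <e_i : alpha(i) <= j> }_{j=1}^{p-1}  (0-based: j < p-1)     *)
Definition flag_alpha (n p : nat) (alpha : 'I_n -> 'I_p) (j : nat) : 'M[F]_n :=
  coord_span (fun i => (alpha i <= j)%N).

Definition stab_alpha (n p : nat) (alpha : 'I_n -> 'I_p) (g : 'M[F]_n) : Prop :=
  g \in unitmx /\ forall j : nat, (j < p.-1)%N -> stabilizes g (flag_alpha alpha j).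

Definition Q_of (d m p : nat) (alpha : 'I_(d * m) -> 'I_p) (x : 'M[F]_m) : Prop :=
  x \in unitmx /\ stab_alpha alpha (blockdiag d x).

Definition beta (d m p : nat) (alpha : 'I_(d * m) -> 'I_p) (r : 'I_m)
  : {ffun 'I_d -> 'I_p} := [ffun k => alpha (mxtens_index (k, r))].

Definition Iset (d m p : nat) (alpha : 'I_(d * m) -> 'I_p) : {set {ffun 'I_d -> 'I_p}} :=
  [set beta alpha r | r : 'I_m].

Definition cle (d p : nat) (x y : {ffun 'I_d -> 'I_p}) : bool :=
  [forall k, (x k <= y k)%N].

Definition upper_borel (m : nat) (b : 'M[F]_m) : Prop :=
  b \in unitmx /\ forall i j : 'I_m, (j < i)%N -> b i j = 0.

Definition is_subgroup (m : nat) (G : 'M[F]_m -> Prop) : Prop :=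
  (forall x, G x -> x \in unitmx) /\ G 1%:M /\
  (forall x y, G x -> G y -> G (x *m y)) /\ (forall x, G x -> G (invmx x)).

Definition parabolic (m : nat) (G : 'M[F]_m -> Prop) : Prop :=
  is_subgroup G /\
  exists g : 'M[F]_m, g \in unitmx /\
    forall b, upper_borel b -> G (g *m b *m invmx g).

Definition mxpow (m : nat) (A : 'M[F]_m) (e : nat) : 'M[F]_m := iter e (mulmx A) 1%:M.
Definition unipotent (m : nat) (g : 'M[F]_m) : Prop :=
  exists e : nat, mxpow (g - 1%:M) e = 0.

Definition normal_subgroup (m : nat) (N G : 'M[F]_m -> Prop) : Prop :=
  is_subgroup N /\ (forall x, N x -> G x) /\
  (forall g x, G g -> N x -> N (g *m x *m invmx g)).

(* unipotent radical: the largest normal subgroup consisting of unipotent  *)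
(* elements (in characteristic 0 this is R_u(G) for closed G).  *)
Definition unip_radical (m : nat) (G : 'M[F]_m -> Prop) (x : 'M[F]_m) : Prop :=
  exists N : 'M[F]_m -> Prop,
    normal_subgroup N G /\ (forall y, N y -> unipotent y) /\ N x.

Definition increasing_enum (d p q : nat) (b : 'I_q -> {ffun 'I_d -> 'I_p})
    (I : {set {ffun 'I_d -> 'I_p}}) : Prop :=
  (forall j j' : 'I_q, (j < j')%N -> cle (b j) (b j') /\ b j != b j') /\
  (forall x, x \in I <-> exists j, x = b j).

(* F_beta = { <e_i : beta(i) <= b_j> }_{j=1}^{q-1} (0-based j < q-1) *)
Definition flag_beta (d m p q : nat) (alpha : 'I_(d * m) -> 'I_p)
    (b : 'I_q -> {ffun 'I_d -> 'I_p}) (j : 'I_q) : 'M[F]_m :=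
  coord_span (fun i => cle (beta alpha i) (b j)).

(* d_j = # beta^{-1}({b_1,...,b_j}) (0-based j) *)
Definition dim_j (d m p q : nat) (alpha : 'I_(d * m) -> 'I_p)
    (b : 'I_q -> {ffun 'I_d -> 'I_p}) (j : 'I_q) : nat :=
  #|[set r : 'I_m | [exists j' : 'I_q, (j' <= j)%N && (beta alpha r == b j')]]|.

Definition in_flag_variety (m q : nat) (dims : 'I_q -> nat) (Fl : 'I_q -> 'M[F]_m) : Prop :=
  (forall j : 'I_q, (j < q.-1)%N -> \rank (Fl j) = dims j) /\
  (forall j j' : 'I_q, (j <= j' < q.-1)%N -> (Fl j <= Fl j')%MS).

End Defs.

(* Main.v *)
Require Import Defs.
From HB Require Import structures.
From mathcomp Require Import all_boot all_order all_algebra.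
From mathcomp Require Import reals complex mxtens.
From mathcomp Require Import fingroup perm.
From Stdlib Require Import FunctionalExtensionality PropExtensionality.
Set Implicit Arguments. Unset Strict Implicit. Unset Printing Implicit Defensive.
Import Order.TTheory GRing.Theory Num.Theory.
Local Open Scope ring_scope.

Notation cspan := Defs.coord_span.
Section Gen.
Variable F : fieldType.
Variable n : nat.
Implicit Types (P : pred 'I_n) (g x y : 'M[F]_n).

Lemma coord_span_diag P : cspan F P = diag_mx (\row_i ((P i)%:R : F)).
Proof.
apply/matrixP=> i j; rewrite !mxE; case: eqP => [->|_]; rewrite ?andbT ?andbF ?mulr1n ?mulr0n //.
Qed.

Lemma coord_span_idem P : cspan F P *m cspan F P = cspan F P.
Proof.
rewrite coord_span_diag mulmx_diag; congr diag_mx; apply/rowP=> j; rewrite !mxE.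
by case: (P j); rewrite ?mulr1 ?mulr0.
Qed.

Lemma sub_coord_spanP k (M : 'M[F]_(k, n)) P :
  reflect (forall i j, ~~ P j -> M i j = 0) (M <= cspan F P)%MS.
Proof.
apply: (iffP idP).
  case/submxP=> W ->; move=> i j nPj.
  rewrite -coord_span_idem mulmxA coord_span_diag mul_mx_diag !mxE.
  by rewrite (negbTE nPj) mulr0.
move=> H; have ->: M = M *m cspan F P; last exact: submxMl.
rewrite coord_span_diag mul_mx_diag; apply/matrixP=> i j; rewrite !mxE.
by case Pj: (P j); rewrite ?mulr1 ?mulr0 // H ?Pj.
Qed.

Lemma stabP g P : g \in unitmx ->
  stabilizes g (cspan F P) <-> (forall i j, P i -> ~~ P j -> g j i = 0).
Proof.
move=> ug; rewrite /stabilizes.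
have eqS : (cspan F P *m g^T <= cspan F P)%MS = ((cspan F P *m g^T) == cspan F P)%MS.
  apply/idP/idP; last by case/andP.
  move=> sub; have := mxrank_leqif_eq sub.
  rewrite mxrankMfree; last by rewrite row_free_unit unitmx_tr.
  by case=> _ <-.
rewrite -eqS; split.
  move/sub_coord_spanP=> H i j Pi nPj; have := H i j nPj.
  by rewrite coord_span_diag mul_diag_mx !mxE Pi mul1r.
move=> H; apply/sub_coord_spanP=> i j nPj.
rewrite coord_span_diag mul_diag_mx !mxE; case Pi: (P i); last by rewrite mul0r.
by rewrite H ?mulr0.
Qed.

Lemma stab_inv g S : g \in unitmx -> stabilizes g S -> stabilizes (invmx g) S.
Proof.
move=> ug /eqmxP st; apply/eqmxP.
have e : (S *m g^T *m (invmx g)^T :=: S *m (invmx g)^T)%MS by apply: eqmxMr.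
rewrite -mulmxA -trmx_mul mulVmx // trmx1 mulmx1 in e.
exact: eqmx_sym e.
Qed.

End Gen.
Section Pre.
Variable F : fieldType.
Variable n : nat.
Variable le : rel 'I_n.
Hypothesis le_refl : reflexive le.
Hypothesis le_trans : transitive le.

Definition Gle (x : 'M[F]_n) := x \in unitmx /\ forall i j, x i j != 0 -> le i j.
Definition ltr i j := le i j && ~~ le j i.
Definition Strict (N : 'M[F]_n) := forall i j, N i j != 0 -> ltr i j.
Definition Upper (N : 'M[F]_n) := forall i j, N i j != 0 -> le i j.
Definition Ule (x : 'M[F]_n) := Strict (x - 1%:M).

Lemma ltr_irr i : ltr i i = false.
Proof. by rewrite /ltr le_refl. Qed.
Lemma ltrW i j : ltr i j -> le i j.
Proof. by case/andP. Qed.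
Lemma ltr_le_trans i j k : ltr i j -> le j k -> ltr i k.
Proof.
case/andP=> lij nji ljk; rewrite /ltr (le_trans lij ljk) /=.
by apply: contra nji => lki; apply: le_trans ljk lki.
Qed.
Lemma le_ltr_trans i j k : le i j -> ltr j k -> ltr i k.
Proof.
move=> lij /andP[ljk nkj]; rewrite /ltr (le_trans lij ljk) /=.
by apply: contra nkj => lki; apply: le_trans lki lij.
Qed.

Lemma sum_neq0 (I : finType) (f : I -> F) : \sum_i f i != 0 -> exists i, f i != 0.
Proof.
move=> H; apply/existsP; apply: contraR H => /existsPn H.
by rewrite big1 // => i _; apply/eqP; move: (H i); rewrite negbK.
Qed.

Lemma mul_neq0 m p (A : 'M[F]_(n, m)) (B : 'M[F]_(m, p)) i j :
  (A *m B) i j != 0 -> exists k, A i k != 0 /\ B k j != 0.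
Proof.
rewrite mxE => /sum_neq0 [k]; rewrite mulf_eq0 negb_or => /andP[? ?]; by exists k.
Qed.

Lemma Upper_mul A B : Upper A -> Upper B -> Upper (A *m B).
Proof.
move=> hA hB i j /mul_neq0 [k [/hA a /hB b]]; exact: le_trans a b.
Qed.
Lemma Strict_mulr A B : Strict A -> Upper B -> Strict (A *m B).
Proof.
move=> hA hB i j /mul_neq0 [k [/hA a /hB b]]; exact: ltr_le_trans a b.
Qed.
Lemma Strict_mull A B : Upper A -> Strict B -> Strict (A *m B).
Proof.
move=> hA hB i j /mul_neq0 [k [/hA a /hB b]]; exact: le_ltr_trans a b.
Qed.
Lemma Strict_opp A : Strict A -> Strict (- A).
Proof. by move=> hA i j; rewrite mxE oppr_eq0; apply: hA. Qed.
Lemma Strict_Upper A : Strict A -> Upper A.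
Proof. by move=> hA i j /hA /ltrW. Qed.
Lemma Upper1 : Upper 1%:M.
Proof. by move=> i j; rewrite mxE; case: (eqVneq i j) => [->|ne]; rewrite ?le_refl // mulr0n eqxx. Qed.

Lemma Ule_Upper x : Ule x -> Upper x.
Proof.
move=> hx i j; case: (eqVneq i j) => [->|ne] nz; first exact: le_refl.
by apply: ltrW; apply: hx; rewrite !mxE (negbTE ne) mulr0n subr0.
Qed.

Definition hgt (i : 'I_n) := #|[pred k | le k i]|.

Lemma hgt_lt i j : ltr i j -> (hgt i < hgt j)%N.
Proof.
case/andP=> lij nji; apply: proper_card; apply/properP; split.
  by apply/subsetP=> k; rewrite !inE => lki; apply: le_trans lki lij.
by exists j; rewrite !inE ?le_refl.
Qed.

Lemma hgt_pos i : (0 < hgt i)%N.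
Proof. by apply/card_gt0P; exists i; rewrite !inE le_refl. Qed.

Lemma Strict_pow N : Strict N -> forall e i j, mxpow N e i j != 0 -> (hgt i + e <= hgt j)%N.
Proof.
move=> hN; elim=> [|e IH] i j /=.
  by rewrite mxE; case: (eqVneq i j) => [->|ne]; rewrite ?addn0 // mulr0n eqxx.
move/mul_neq0=> [k [/hN /hgt_lt a /IH b]]; rewrite addnS.
by apply: leq_trans b; rewrite ltn_add2r.
Qed.

Lemma Strict_nil N : Strict N -> mxpow N n = 0.
Proof.
move=> hN; apply/matrixP=> i j; rewrite mxE; apply/eqP; apply: contraT => /(Strict_pow hN).
have := hgt_pos i; have : (hgt j <= n)%N by rewrite -[n]card_ord max_card.
by move=> a b c; have := leq_trans c a; rewrite -{2}[n]add0n leq_add2r leqNgt b.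
Qed.

Lemma geom_mx (N : 'M[F]_n) e : (1%:M - N) *m (\sum_(k < e) mxpow N k) = 1%:M - mxpow N e.
Proof.
elim: e => [|e IH]; first by rewrite big_ord0 mulmx0 /= subrr.
rewrite big_ord_recr /= mulmxDr IH mulmxBl mul1mx.
by rewrite addrA subrK.
Qed.

Lemma Ule_unit x : Ule x -> x \in unitmx.
Proof.
move=> hx; have hN : Strict (1%:M - x).
  by rewrite -opprB; apply: Strict_opp.
have := geom_mx (1%:M - x) n; rewrite (Strict_nil hN) subr0 opprB addrC subrK.
by case/mulmx1_unit.
Qed.

Lemma Ule_Gle x : Ule x -> Gle x.
Proof. by move=> hx; split; [exact: Ule_unit | exact: Ule_Upper]. Qed.

Lemma Gle_stab x : x \in unitmx ->
  Upper x <-> forall j, stabilizes x (cspan F (fun k => le k j)).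
Proof.
move=> ux; split.
  move=> hx j; apply/stabP => // i k lij; apply: contraNeq => /hx lki.
  exact: le_trans lki lij.
move=> H i j; apply: contraNT => nle; apply/eqP.
by have /(stabP _ ux) := H j; apply => //; apply: le_refl.
Qed.

Lemma Gle_inv x : Gle x -> Gle (invmx x).
Proof.
case=> ux hx; have uxi : invmx x \in unitmx by rewrite unitmx_inv.
split => //; apply/(Gle_stab uxi) => j.
by apply: stab_inv => //; exact: (proj1 (Gle_stab ux) hx j).
Qed.

Lemma Gle_mul x y : Gle x -> Gle y -> Gle (x *m y).
Proof. by case=> ux hx [uy hy]; split; [rewrite unitmx_mul ux | exact: Upper_mul]. Qed.

Lemma Gle_1 : Gle 1%:M.
Proof. by split; [exact: unitmx1 | exact: Upper1]. Qed.

Lemma Gle_sub : is_subgroup Gle.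
Proof.
split; first by move=> x [].
split; first exact: Gle_1.
by split; [exact: Gle_mul | exact: Gle_inv].
Qed.

Lemma Ule_1 : Ule 1%:M.
Proof. by move=> i j; rewrite subrr mxE eqxx. Qed.

Lemma Ule_mul x y : Ule x -> Ule y -> Ule (x *m y).
Proof.
move=> hx hy; rewrite /Ule.
have -> : x *m y - 1%:M = (x - 1%:M) *m y + (y - 1%:M).
  by rewrite mulmxBl mul1mx addrA subrK.
move=> i j; rewrite mxE; apply: contraTT => nl.
have e1 : ((x - 1%:M) *m y) i j = 0.
  by apply/eqP; apply: contraNT nl => /(Strict_mulr hx (Ule_Upper hy)).
have e2 : (y - 1%:M) i j = 0 by apply/eqP; apply: contraNT nl => /hy.
by rewrite e1 e2 addr0 eqxx.
Qed.

Lemma Ule_inv x : Ule x -> Ule (invmx x).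
Proof.
move=> hx; have ux := Ule_unit hx; rewrite /Ule.
have -> : invmx x - 1%:M = - (invmx x *m (x - 1%:M)).
  by rewrite mulmxBr mulVmx // mulmx1 opprB.
have [_ hi] := Gle_inv (Ule_Gle hx).
by apply: Strict_opp; apply: Strict_mull hx.
Qed.

Lemma Ule_conj g x : Gle g -> Ule x -> Ule (g *m x *m invmx g).
Proof.
move=> [ug hg] hx; rewrite /Ule.
have -> : g *m x *m invmx g - 1%:M = g *m (x - 1%:M) *m invmx g.
  by rewrite mulmxBr mulmxBl mulmx1 mulmxV.
have [_ hi] := Gle_inv (conj ug hg).
by apply: Strict_mulr; first exact: Strict_mull.
Qed.

Lemma Ule_normal : normal_subgroup Ule Gle.
Proof.
split; last split.
- split; first exact: Ule_unit.
  split; first exact: Ule_1.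
  by split; [exact: Ule_mul | exact: Ule_inv].
- exact: Ule_Gle.
- exact: Ule_conj.
Qed.

Lemma Ule_unip x : Ule x -> unipotent x.
Proof. by move=> hx; exists n; exact: Strict_nil. Qed.

End Pre.
Section Trace.
Variable C : numClosedFieldType.

Lemma pow_eig n (A : 'M[C]_n) (v : 'rV_n) z e :
  v *m A = z *: v -> v *m mxpow A e = z ^+ e *: v.
Proof.
move=> hv; elim: e => [|e IH] /=; first by rewrite mulmx1 expr0 scale1r.
by rewrite mulmxA hv -scalemxAl IH scalerA exprS.
Qed.

Lemma nil_trace n (A : 'M[C]_n) e : mxpow A e = 0 -> \tr A = 0.
Proof.
case: n A => [|n] A hA; first by rewrite /mxtrace big_ord0.
have [r hr] := closed_field_poly_normal (char_poly A).
rewrite (monicP (char_poly_monic A)) scale1r in hr.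
have r0 : forall z, z \in r -> z = 0.
  move=> z zr; have : eigenvalue A z by rewrite eigenvalue_root_char hr root_prod_XsubC.
  case/eigenvalueP=> v hv nv; have := pow_eig e hv; rewrite hA mulmx0.
  move/esym/eqP; rewrite scalemx_eq0 (negbTE nv) orbF expf_eq0 => /andP[_ /eqP //].
have hp : \prod_(z <- r) ('X - z%:P) = 'X^(size r) :> {poly C}.
  elim: r r0 {hr} => [|z r IH] r0; first by rewrite big_nil expr0.
  rewrite big_cons IH; last by move=> w wr; apply: r0; rewrite inE wr orbT.
  by rewrite (r0 z) ?inE ?eqxx // subr0 exprS.
have sr : size r = n.+1.
  by have := size_char_poly A; rewrite hr size_prod_XsubC => -[].
have := char_poly_trace A (ltn0Sn n); rewrite hr hp sr coefXn /=.
rewrite (_ : (n == n.+1) = false) ?mulr0n; last by elim: n {A hA hr hp sr}.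
by move/esym/eqP; rewrite oppr_eq0 => /eqP.
Qed.

Lemma unip_trace n (x : 'M[C]_n) : unipotent x -> \tr x = n%:R.
Proof.
case=> e he; have := nil_trace he; rewrite linearB /= mxtrace1.
by move/eqP; rewrite subr_eq0 => /eqP.
Qed.

End Trace.
Section Key.
Variable C : numClosedFieldType.
Variable n : nat.
Variable le : rel 'I_n.
Hypothesis le_refl : reflexive le.
Hypothesis le_trans : transitive le.

Lemma mulE (A : 'M[C]_n) (j i p q : 'I_n) : (A *m delta_mx j i) p q = A p j * (q == i)%:R.
Proof.
rewrite mxE (bigD1 j) //= big1 => [|k /negbTE kj]; rewrite mxE ?eqxx ?kj /= ?addr0 ?mulr0 //.
Qed.

Lemma Emul (A : 'M[C]_n) (j i p q : 'I_n) : (delta_mx j i *m A) p q = (p == j)%:R * A i q.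
Proof.
rewrite mxE (bigD1 i) //= big1 => [|k /negbTE kj]; rewrite mxE ?eqxx ?kj /= ?andbT ?andbF ?addr0 ?mul0r //.
Qed.

Definition DS (A : 'M[C]_n) := forall p q, A p q != 0 -> (p == q) || ltr le p q.

Lemma ltr_trans' i j k : ltr le i j -> ltr le j k -> ltr le i k.
Proof. by move=> a /(ltrW) b; exact: ltr_le_trans a b. Qed.

Lemma DS_mul A B : DS A -> DS B -> DS (A *m B) /\ forall i, (A *m B) i i = A i i * B i i.
Proof.
move=> hA hB; split.
  move=> p q /mul_neq0 [k [/hA a /hB b]].
  case/orP: a => [/eqP ->|a] //; case/orP: b => [/eqP <-|b]; rewrite ?a ?orbT //.
  by rewrite (ltr_trans' a b) orbT.
move=> i; rewrite mxE (bigD1 i) //= big1 ?addr0 // => k ki.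
case: (eqVneq (A i k) 0) => [->|a]; first by rewrite mul0r.
case: (eqVneq (B k i) 0) => [->|b]; first by rewrite mulr0.
move: (hA _ _ a) (hB _ _ b); rewrite eq_sym (negbTE ki) /= => c d.
by have := ltr_trans' c d; rewrite ltr_irr.
Qed.

Lemma DS_pow A : DS A -> forall e, DS (mxpow A e) /\ forall i, mxpow A e i i = A i i ^+ e.
Proof.
move=> hA; elim=> [|e [IH1 IH2]] /=.
  split; last by move=> i; rewrite mxE eqxx expr0.
  move=> p q; rewrite mxE; case: (eqVneq p q) => //; by rewrite mulr0n eqxx.
have [h1 h2] := DS_mul hA IH1; split => // i; by rewrite h2 IH2 exprS.
Qed.

Lemma key_lemma (N : 'M[C]_n -> Prop) :
  normal_subgroup N (Gle le) -> (forall y, N y -> unipotent y) ->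
  forall y, N y -> Ule le y.
Proof.
move=> [[Nunit [N1 [Nmul Ninv]]] [NG Nconj]] Nunip y Ny.
have trN : forall a, N a -> \tr a = n%:R by move=> a /Nunip /unip_trace.
have trP : forall a b, N a -> N b -> \tr ((a - 1%:M) *m (b - 1%:M)) = 0.
  move=> a b Na Nb; rewrite mulmxBl mulmxBr mul1mx mulmx1 !linearB /=.
  by rewrite (trN _ (Nmul _ _ Na Nb)) (trN _ Na) (trN _ Nb) mxtrace1 !subrr.
rewrite /Ule; have [M eM] : exists M, M = y - 1%:M by eexists.
rewrite -eM.
have [uy Uy] := NG y Ny.
have UM : forall p q, M p q != 0 -> le p q.
  move=> p q; case: (eqVneq p q) => [->|pq]; first by rewrite le_refl.
  by rewrite eM !mxE (negbTE pq) mulr0n subr0 => /Uy.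
have s1 : forall i j, i != j -> le j i -> M i j = 0.
  move=> i j nij lji; set E := delta_mx j i : 'M[C]_n.
  have EE : E *m E = 0 by rewrite mul_delta_mx_cond (negbTE nij) mulr0n.
  set X := 1%:M + E; set Yx := 1%:M - E.
  have XY : X *m Yx = 1%:M.
    by rewrite mulmxDl mul1mx mulmxBr mulmx1 EE subr0 /Yx subrK.
  have [uX _] := mulmx1_unit XY.
  have iX : invmx X = Yx by rewrite -[invmx X]mulmx1 -XY mulmxA mulVmx // mul1mx.
  have GX : Gle le X.
    split => // p q; rewrite !mxE; case: (eqVneq p q) => [->|pq]; first by rewrite le_refl.
    rewrite mulr0n add0r; case: (eqVneq p j) => [->|pj] /=; last by rewrite eqxx.
    by case: (eqVneq q i) => [->|qi] //; rewrite eqxx.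
  have Nz := Nconj X y GX Ny; rewrite iX in Nz.
  have h := trP _ _ Ny Nz.
  have e1 : X *m y *m Yx - 1%:M = X *m M *m Yx.
    by rewrite eM [X *m (y - _)]mulmxBr [X *m 1%:M]mulmx1 mulmxBl XY.
  have e2' : forall M', X *m M' *m Yx = M' + E *m M' - M' *m E - E *m M' *m E.
    by move=> M'; rewrite mulmxDl mul1mx mulmxBr mulmx1 mulmxDl opprD addrA.
  have e2 := e2' M.
  have e3 : E *m M *m E = M i j *: E.
    apply/matrixP=> p q; rewrite mulE Emul !mxE.
    by case: (p == j); case: (q == i); rewrite /= ?mulr1 ?mul1r ?mulr0 ?mul0r.
  have e4 : \tr (M *m E) = M i j.
    rewrite /mxtrace (bigD1 i) //= big1 => [|k /negbTE ki]; rewrite mulE ?eqxx ?ki ?mulr1 ?mulr0 ?addr0 //.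
  have hMM := trP _ _ Ny Ny; rewrite -eM in hMM.
  rewrite e1 e2 -eM !mulmxDr !mulmxN !linearD !linearN /= hMM in h.
  rewrite e3 -scalemxAr linearZ /= e4 in h.
  have e5 : \tr (M *m (E *m M)) = \tr (M *m (M *m E)) by rewrite mulmxA mxtrace_mulC.
  rewrite e5 add0r subrr sub0r in h.
  by move/eqP: h; rewrite oppr_eq0 mulf_eq0 orbb => /eqP.
have DSM : DS M.
  move=> p q nz; case: (eqVneq p q) => //= pq; rewrite /ltr (UM _ _ nz) /=.
  by apply: contra nz => lqp; rewrite s1.
have hdiag : forall i, M i i = 0.
  move=> i; have [e he] := Nunip y Ny; have [_ h2] := DS_pow DSM e.
  rewrite -eM in he; have := h2 i; rewrite he mxE => /esym/eqP; rewrite expf_eq0 => /andP[_ /eqP //].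
move=> p q nz; case/orP: (DSM p q nz) => [/eqP epq|] //.
by move: nz; rewrite epq hdiag eqxx.
Qed.

End Key.
Section Gen2.
Variable F : fieldType.

Lemma mul_delta_r n (A : 'M[F]_n) (i j r k : 'I_n) :
  (A *m delta_mx i j) r k = A r i * (k == j)%:R.
Proof.
rewrite mxE (bigD1 i) //= big1 => [|l /negbTE li]; rewrite mxE ?eqxx ?li /= ?addr0 ?mulr0 //.
Qed.

Lemma delta_triple n (A B : 'M[F]_n) (i j r s : 'I_n) :
  (A *m delta_mx i j *m B) r s = A r i * B j s.
Proof.
rewrite mxE (bigD1 j) //= big1 => [|k /negbTE kj]; rewrite mul_delta_r ?eqxx ?kj ?mulr1 ?mulr0 ?mul0r ?addr0 //.
Qed.

Lemma rank_cspan n (P : pred 'I_n) : \rank (cspan F P) = #|P|.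
Proof.
pose B := \matrix_(a < #|P|, c < n) ((enum_val a == c)%:R : F).
have BBt : B *m B^T = 1%:M.
  apply/matrixP=> a b; rewrite !mxE (bigD1 (enum_val a)) //= big1 => [|c /negbTE ca].
    by rewrite !mxE eqxx mul1r addr0 (inj_eq enum_val_inj) eq_sym.
  by rewrite !mxE eq_sym ca mul0r.
have BtB : B^T *m B = cspan F P.
  apply/matrixP=> i j; rewrite !mxE; case Pi: (P i).
    rewrite (bigD1 (enum_rank_in Pi i)) //= big1 => [|a ai].
      rewrite !mxE enum_rankK_in //= eqxx mul1r addr0; congr (_%:R).
    rewrite !mxE; case: (eqVneq (enum_val a) i) => [ea|]; last by rewrite mul0r.
    by move/negP: ai; case; apply/eqP; apply: enum_val_inj; rewrite ea enum_rankK_in.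
  rewrite /= big1 // => a _; rewrite !mxE; case: (eqVneq (enum_val a) i) => [ea|]; last by rewrite mul0r.
  by have := enum_valP a; rewrite ea -topredE /= Pi.
have sB : (B <= cspan F P)%MS.
  apply/sub_coord_spanP=> a c nPc; rewrite mxE; case: eqP => // ea.
  by have := enum_valP a; rewrite ea -topredE /= (negbTE nPc).
have sB' : (cspan F P <= B)%MS by rewrite -BtB submxMl.
have -> : \rank (cspan F P) = \rank B.
  by apply/eqmx_rank; rewrite /eqmx sB sB'.
apply/eqP; rewrite eqn_leq rank_leq_row /=.
by have := mxrankM_maxl B B^T; rewrite BBt mxrank1.
Qed.

Lemma invmx_right n (A B : 'M[F]_n) : A *m B = 1%:M -> invmx A = B.
Proof.
move=> AB; have [uA _] := mulmx1_unit AB.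
by rewrite -[invmx A]mulmx1 -AB mulmxA mulVmx // mul1mx.
Qed.

End Gen2.
Section Chain.
Variable F : fieldType.
Variable m K : nat.
Variable C : nat -> 'M[F]_m.
Hypothesis Cmono : forall j j', (j <= j')%N -> (j' < K)%N -> (C j <= C j')%MS.

Definition jmin (i : nat) := find (fun j => (i < \rank (C j))%N) (iota 0 K).
Definition Cof i := if (jmin i < K)%N then C (jmin i) else 1%:M.

Lemma jmin_le i : (jmin i <= K)%N.
Proof. by have := find_size (fun j => (i < \rank (C j))%N) (iota 0 K); rewrite size_iota. Qed.

Lemma jmin_rank i : (jmin i < K)%N -> (i < \rank (C (jmin i)))%N.
Proof.
move=> h; have hh : has (fun j => (i < \rank (C j))%N) (iota 0 K).
  by rewrite has_find size_iota.
by have := nth_find 0 hh; rewrite nth_iota ?add0n // -(size_iota 0 K) -has_find.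
Qed.

Lemma jmin_min i j : (j < K)%N -> (i < \rank (C j))%N -> (jmin i <= j)%N.
Proof.
move=> jK hj; rewrite leqNgt; apply/negP => lt.
by have := before_find 0 lt; rewrite nth_iota ?add0n // hj.
Qed.

Lemma jmin_mono i i' : (i <= i')%N -> (jmin i <= jmin i')%N.
Proof.
move=> le; case: (ltnP (jmin i') K) => h; last exact: leq_trans (jmin_le i) h.
by apply: jmin_min => //; apply: leq_ltn_trans le (jmin_rank h).
Qed.

Lemma Cof_mono i t : (i <= t)%N -> (Cof i <= Cof t)%MS.
Proof.
move=> le; rewrite /Cof; case ht: (jmin t < K)%N; last by rewrite submx1.
by rewrite (leq_ltn_trans (jmin_mono le) ht); apply: Cmono => //; exact: jmin_mono.
Qed.

Lemma Cof_rank t : (t < m)%N -> (t < \rank (Cof t))%N.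
Proof. by move=> tm; rewrite /Cof; case: ifP => h; [exact: jmin_rank | rewrite mxrank1]. Qed.

Definition mxs (s : seq 'rV[F]_m) t : 'M[F]_(t, m) := \matrix_(i < t) nth 0 s i.

Lemma build t : (t <= m)%N -> exists s : seq 'rV[F]_m,
  [/\ size s = t, \rank (mxs s t) = t & forall i, (i < t)%N -> (nth 0 s i <= Cof i)%MS].
Proof.
elim: t => [|t IH] ht.
  by exists [::]; split => //; rewrite /mxs; apply/eqP; rewrite -leqn0 rank_leq_row.
have [s [ss rs hs]] := IH (ltnW ht).
set A := mxs s t.
have AC : (A <= Cof t)%MS.
  apply/row_subP=> i; rewrite rowK; apply: submx_trans (hs _ (ltn_ord i)) _.
  by apply: Cof_mono; apply: ltnW.
have nCA : ~~ (Cof t <= A)%MS.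
  apply/negP => /mxrankS; rewrite rs leqNgt; by rewrite Cof_rank.
have [k hk] : exists k, ~~ (row k (Cof t) <= A)%MS.
  apply/existsP; apply: contraR nCA => /existsPn H; apply/row_subP => k.
  by have := H k; rewrite negbK.
set v := row k (Cof t).
exists (rcons s v); split; first by rewrite size_rcons ss.
  have eq1 : (mxs (rcons s v) t.+1 == A + v)%MS.
    apply/andP; split.
      apply/row_subP=> i; rewrite rowK nth_rcons ss.
      case: ifP => hi.
        apply: submx_trans (addsmxSl A v).
        by have := row_sub (Ordinal hi) A; rewrite rowK.
      have -> : (i : nat) = t by apply/eqP; rewrite eqn_leq -ltnS ltn_ord leqNgt hi.
      by rewrite eqxx addsmxSr.
    rewrite addsmx_sub; apply/andP; split.
      apply/row_subP=> i; rewrite rowK.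
      have hi : (i < t.+1)%N by apply: ltnW; rewrite ltnS ltn_ord.
      by have := row_sub (Ordinal hi) (mxs (rcons s v) t.+1); rewrite rowK nth_rcons ss /= ltn_ord.
    have ht1 : (t < t.+1)%N by [].
    by have := row_sub (Ordinal ht1) (mxs (rcons s v) t.+1); rewrite rowK nth_rcons ss ltnn eqxx.
  rewrite (eqmx_rank eq1).
  have sA : (A <= A + v)%MS by apply: addsmxSl.
  have := mxrank_leqif_sup sA; rewrite rs => -[le1 eqc].
  have lt1 : (t < \rank (A + v))%N.
    rewrite ltn_neqAle le1 andbT eqc; apply/negP; rewrite addsmx_sub submx_refl /=.
    by apply/negP.
  have := mxrank_adds_leqif A v; rewrite rs rank_rV => -[le2 _].
  apply/eqP; rewrite eqn_leq lt1 andbT; apply: leq_trans le2 _.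
  by rewrite -[t.+1]addn1 leq_add2l leq_b1.
move=> i hi; rewrite nth_rcons ss; case: ifP => [h|h]; first exact: hs.
have -> : i = t by apply/eqP; rewrite eqn_leq -ltnS hi leqNgt h.
by rewrite eqxx /v row_sub.
Qed.

Lemma adapted : exists E : 'M[F]_m, E \in unitmx /\
  forall j, (j < K)%N -> ((pid_mx (\rank (C j)) : 'M[F]_m) *m E == C j)%MS.
Proof.
have [s [ss rs hs]] := build (leqnn m).
set E := mxs s m.
have uE : E \in unitmx by rewrite -row_free_unit /row_free rs.
exists E; split => // j jK.
have sub : ((pid_mx (\rank (C j)) : 'M[F]_m) *m E <= C j)%MS.
  apply/row_subP=> i; rewrite row_mul.
  case: (ltnP i (\rank (C j))) => hi.
    have -> : row i (pid_mx (\rank (C j))) = row i (1%:M : 'M[F]_m).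
      apply/rowP=> k; rewrite !mxE hi andbT //.
    rewrite row1 -rowE rowK; apply: submx_trans (hs i (ltn_ord i)) _.
    rewrite /Cof (leq_ltn_trans (jmin_min jK hi) jK).
    by apply: Cmono => //; exact: jmin_min.
  have -> : row i (pid_mx (\rank (C j))) = 0 :> 'rV[F]_m.
    by apply/rowP=> k; rewrite !mxE ltnNge hi andbF.
  by rewrite mul0mx sub0mx.
have := mxrank_leqif_eq sub; rewrite mxrankMfree ?row_free_unit //.
rewrite rank_pid_mx ?rank_leq_col ?rank_leq_row // => -[_ <-] //.
Qed.

End Chain.
Section Conc.
Variable F : fieldType.
Variables d m p : nat.
Variable alpha : 'I_(d * m) -> 'I_p.

Definition leP : rel 'I_(d * m) := fun a b => (alpha a <= alpha b)%N.
Definition leQ : rel 'I_m := fun r s => cle (beta alpha r) (beta alpha s).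

Lemma leP_refl : reflexive leP. Proof. by move=> a; rewrite /leP leqnn. Qed.
Lemma leP_trans : transitive leP. Proof. by move=> a b c; rewrite /leP; apply: leq_trans. Qed.

Lemma cle_refl dd pp (x : {ffun 'I_dd -> 'I_pp}) : cle x x.
Proof. by apply/forallP=> k; rewrite leqnn. Qed.
Lemma cle_trans dd pp (x y z : {ffun 'I_dd -> 'I_pp}) : cle x y -> cle y z -> cle x z.
Proof.
move=> /forallP a /forallP b; apply/forallP=> k; exact: leq_trans (a k) (b k).
Qed.
Lemma cle_anti dd pp (x y : {ffun 'I_dd -> 'I_pp}) : cle x y -> cle y x -> x = y.
Proof.
move=> /forallP a /forallP b; apply/ffunP=> k; apply/val_inj/eqP.
by rewrite eqn_leq a b.
Qed.

Lemma leQ_refl : reflexive leQ. Proof. by move=> r; exact: cle_refl. Qed.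
Lemma leQ_trans : transitive leQ. Proof. by move=> a b c; apply: cle_trans. Qed.

Lemma betaE r k : beta alpha r k = alpha (mxtens_index (k, r)).
Proof. by rewrite ffunE. Qed.

Lemma bdE (x : 'M[F]_m) k1 r k2 s :
  blockdiag d x (mxtens_index (k1, r)) (mxtens_index (k2, s)) = (k1 == k2)%:R * x r s.
Proof. by rewrite /blockdiag tensmxE mxE. Qed.

Lemma mxtens_index_eq (k1 k2 : 'I_d) (r s : 'I_m) :
  (mxtens_index (k1, r) == mxtens_index (k2, s)) = (k1 == k2) && (r == s).
Proof. by rewrite (can_eq (@mxtens_indexK d m)) xpair_eqE. Qed.

Lemma stab_alphaE (g : 'M[F]_(d * m)) : stab_alpha alpha g <-> Gle leP g.
Proof.
split.
  case=> ug H; split=> // b a nz; rewrite /leP.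
  case: (ltnP (alpha a) p.-1) => h.
    have /(stabP _ ug) S := H _ h.
    by apply: contraTT nz => nb; rewrite negbK (S a b (leqnn _) nb).
  apply: leq_trans h; rewrite -ltnS; case: (p) (alpha b) => [|p'] [] //.
move=> [ug U]; split=> // j hj; apply/(stabP _ ug) => i k Pi nPk.
by apply/eqP; apply: contraNT nPk => nz; exact: leq_trans (U _ _ nz) Pi.
Qed.

Hypothesis hd : (0 < d)%N.
Hypothesis hm : (0 < m)%N.

Lemma bd_unit (x : 'M[F]_m) : x \in unitmx -> blockdiag d x \in unitmx.
Proof.
move=> ux; apply: tensmx_unit => //; rewrite -?lt0n // unitmx1 //.
Qed.

Lemma Q_ofE (x : 'M[F]_m) : Q_of alpha x <-> Gle leQ x.
Proof.
split.
  case=> ux /stab_alphaE [_ U]; split=> // s r nz; apply/forallP=> k; rewrite !betaE.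
  by apply: U; rewrite bdE eqxx mul1r.
move=> [ux U]; split=> //; apply/stab_alphaE; split; first exact: bd_unit.
move=> a b; case: (mxtens_indexP a) => k1 s; case: (mxtens_indexP b) => k2 r.
rewrite bdE; case: (eqVneq k1 k2) => [<-|]; last by rewrite mul0r eqxx.
by rewrite mul1r => /U /forallP /(_ k1); rewrite !betaE.
Qed.

End Conc.

Section Conc2.
Variable F : fieldType.
Variables d m : nat.

Lemma bd1 : blockdiag d (1%:M : 'M[F]_m) = 1%:M.
Proof.
apply/matrixP=> a b; case: (mxtens_indexP a) => k1 s; case: (mxtens_indexP b) => k2 r.
rewrite bdE !mxE mxtens_index_eq; case: (k1 == k2); case: (s == r); by rewrite ?mul1r ?mul0r.
Qed.

Lemma bdB (x y : 'M[F]_m) : blockdiag d (x - y) = blockdiag d x - blockdiag d y.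
Proof.
apply/matrixP=> a b; case: (mxtens_indexP a) => k1 s; case: (mxtens_indexP b) => k2 r.
have -> : (blockdiag d x - blockdiag d y) (mxtens_index (k1, s)) (mxtens_index (k2, r)) =
  blockdiag d x (mxtens_index (k1, s)) (mxtens_index (k2, r)) -
  blockdiag d y (mxtens_index (k1, s)) (mxtens_index (k2, r)) by rewrite !mxE.
by rewrite !bdE !mxE mulrBr.
Qed.

End Conc2.
Theorem lemma5p1 (R : realType) (m d p : nat) (hm : (0 < m)%N) (hd : (1 < d)%N)
    (alpha : 'I_(d * m) -> 'I_p) (halpha : forall j : 'I_p, exists i, alpha i = j) :
  let Q := @Q_of R[i] d m p alpha in
  let I := Iset alpha in
  let total := forall x y, x \in I -> y \in I -> cle x y || cle y x in
  (* (a) *)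
  (parabolic Q <-> total) /\
  (total ->
   forall (q : nat) (b : 'I_q -> {ffun 'I_d -> 'I_p}), increasing_enum b I ->
     (forall x : 'M[R[i]]_m, Q x <->
        (x \in unitmx /\
         forall j : 'I_q, (j < q.-1)%N -> stabilizes x (flag_beta R[i] alpha b j))) /\
     in_flag_variety (dim_j alpha b) (flag_beta R[i] alpha b) /\
     (forall Fl : 'I_q -> 'M[R[i]]_m, in_flag_variety (dim_j alpha b) Fl ->
        exists g : 'M[R[i]]_m, g \in unitmx /\
          forall j : 'I_q, (j < q.-1)%N -> ((flag_beta R[i] alpha b j *m g^T) == Fl j)%MS)) /\
  (* (b) *)
  (parabolic Q ->
   ((forall x : 'M[R[i]]_m, unip_radical Q x ->
       unip_radical (@stab_alpha R[i] (d * m) p alpha) (blockdiag d x)) <->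
    (forall x y, x \in I -> y \in I -> x != y -> forall k : 'I_d, x k != y k))).
Proof.
move=> Q I tot.
have hd0 : (0 < d)%N by apply: ltn_trans hd.
have eQ : Q = Gle (leQ alpha).
  by apply: functional_extensionality => x; apply: propositional_extensionality; exact: Q_ofE.
have eP : @stab_alpha R[i] (d * m) p alpha = Gle (leP alpha).
  by apply: functional_extensionality => x; apply: propositional_extensionality; exact: stab_alphaE.
have Irepr : forall x, x \in I -> exists r, x = beta alpha r.
  by move=> x /imsetP [r _ ->]; exists r.
have betaI : forall r, beta alpha r \in I by move=> r; apply: imset_f.
have totQ : tot -> forall r s, leQ alpha r s || leQ alpha s r.
  by move=> T r s; apply: T.
have lQr := @leQ_refl d m p alpha; have lQt := @leQ_trans d m p alpha.
have lPr := @leP_refl d m p alpha; have lPt := @leP_trans d m p alpha.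
have a1 : parabolic Q <-> tot.
  split.
    rewrite eQ; case=> _ [g [ug Hg]] x y /Irepr [r ->] /Irepr [s ->].
    apply/negPn/negP => /norP [nrs nsr].
    have rs : r != s by apply: contraNneq nrs => ->; exact: lQr.
    set h := invmx g.
    have key : forall i j : 'I_m, (i <= j)%N -> g r i * h j s = 0 /\ g s i * h j r = 0.
      move=> i j ij; set E := delta_mx i j : 'M[R[i]]_m.
      have up : forall k l : 'I_m, (l < k)%N -> (1%:M + E) k l = 0.
        move=> k l lk; rewrite !mxE; case: (eqVneq k l) => [kl|kl].
          by move: lk; rewrite kl ltnn.
        rewrite mulr0n add0r; case: (eqVneq k i) => [ki|] //=; case: (eqVneq l j) => [lj|] //=.
        by move: lk; rewrite ki lj ltnNge ij.
      have ub : upper_borel (1%:M + E).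
        split => //; rewrite unitmxE -det_tr det_trig.
          rewrite unitfE; apply/prodf_neq0 => k _; rewrite !mxE eqxx.
          by rewrite addrC natr1 pnatr_eq0.
        apply/forallP => k; apply/forallP => l; apply/implyP => kl.
        by rewrite mxE up.
      have [_ Uc] := Hg _ ub.
      have ent : forall u v, u != v -> (g *m (1%:M + E) *m h) u v = g u i * h j v.
        move=> u v uv; rewrite mulmxDr mulmx1 mulmxDl mulmxV // mxE delta_triple mxE.
        by rewrite (negbTE uv) mulr0n add0r.
      split.
        by rewrite -ent //; apply/eqP; apply: contraNT nrs => /Uc.
      by rewrite -ent 1?eq_sym //; apply/eqP; apply: contraNT nsr => /Uc.
    have e1 : forall u, \sum_a g u a * h a u = 1.
      by move=> u; have := mulmxV ug; move/matrixP/(_ u u); rewrite !mxE eqxx.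
    have : (1 : R[i]) = 0.
      rewrite -(mulr1 1) -{1}(e1 r) -(e1 s) big_distrlr /= big1 // => a _.
      rewrite big1 // => b' _.
      rewrite [g s b' * _]mulrC mulrACA.
      case: (leqP a b') => ab.
        by rewrite (proj1 (key _ _ ab)) mul0r.
      have := proj2 (key _ _ (ltnW ab)); rewrite [h a r * _]mulrC => ->.
      by rewrite mulr0.
    by move/eqP; rewrite oner_eq0.
  move=> T; have tQ := totQ T; rewrite eQ; split.
    exact: (Gle_sub _ lQr lQt).
  pose x0 : 'I_m := Ordinal hm.
  pose L := sort (leQ alpha) (enum 'I_m).
  have sL : sorted (leQ alpha) L by apply: sort_sorted => u v; exact: tQ.
  have pL : perm_eq L (enum 'I_m) by rewrite perm_sort perm_refl.
  have uL : uniq L by rewrite (perm_uniq pL) enum_uniq.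
  have szL : size L = m by rewrite (perm_size pL) size_enum_ord.
  pose t (k : 'I_m) : 'I_m := nth x0 L k.
  have t_inj : injective t.
    move=> k k' /eqP; rewrite /t nth_uniq ?szL // => /eqP; exact: val_inj.
  pose tp := perm t_inj.
  pose sg := (tp^-1)%g.
  have psg : perm_mx sg *m perm_mx (sg^-1)%g = 1%:M :> 'M[R[i]]_m.
    by rewrite -perm_mxM mulgV perm_mx1.
  have usg := proj1 (mulmx1_unit psg).
  exists (perm_mx sg); split => //.
  move=> bb [ub Ub].
  have iv : invmx (perm_mx sg) = perm_mx (sg^-1)%g :> 'M[R[i]]_m.
    exact: invmx_right psg.
  have ee : perm_mx sg *m bb *m invmx (perm_mx sg) = col_perm sg (row_perm sg bb).
    by rewrite iv col_permE row_permE.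
  rewrite ee; split.
    by rewrite -ee !unitmx_mul unitmx_inv ub usg.
  move=> u v; rewrite !mxE => nz.
  have le_uv : (sg u <= sg v)%N by rewrite leqNgt; apply: contraNN nz => lt; rewrite Ub.
  have -> : u = t (sg u) by rewrite /sg -permE permKV.
  have -> : v = t (sg v) by rewrite /sg -permE permKV.
  by apply: (sorted_leq_nth lQt lQr x0 sL) => //; rewrite inE szL.
split; first exact: a1.
split; last first.
  move=> par; have T := (proj1 a1) par.
  rewrite eQ eP; split.
    move=> incl x0 y0 /Irepr [s ->] /Irepr [r ->] neq k.
    have claim : forall s' r', ltr (leQ alpha) s' r' -> beta alpha s' k != beta alpha r' k.
      move=> s' r' lt.
      have sr : s' != r' by apply: contraTneq lt => ->; rewrite (ltr_irr lQr).
      pose X := 1%:M + delta_mx s' r' : 'M[R[i]]_m.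
      have UX : Ule (leQ alpha) X.
        rewrite /Ule /X addrAC subrr add0r => u v; rewrite mxE.
        case: (eqVneq u s') => [->|nu]; case: (eqVneq v r') => [->|nv] //=;
          by rewrite ?(negbTE nu) ?(negbTE nv) ?andbF ?eqxx.
      have [N [nN [uN NX]]] := incl X (ex_intro _ (Ule (leQ alpha))
        (conj (Ule_normal _ lQr lQt) (conj (fun y => @Ule_unip _ _ _ lQr lQt y) UX))).
      have Ubd := key_lemma lPr lPt nN uN NX.
      have := Ubd (mxtens_index (k, s')) (mxtens_index (k, r')).
      rewrite -bd1 -bdB bdE eqxx mul1r /X addrAC subrr add0r mxE !eqxx /= oner_neq0 => /(_ isT).
      case/andP=> _; rewrite /leP -!betaE; apply: contraNneq => ->; exact: leqnn.
    case/orP: (T _ _ (betaI s) (betaI r)) => c.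
      apply: claim; rewrite /ltr /leQ c /=; apply: contra neq => c'; apply/eqP; exact: cle_anti.
    rewrite eq_sym; apply: claim; rewrite /ltr /leQ c /=; apply: contra neq => c'.
    by apply/eqP; exact: cle_anti.
  move=> Cond x [N [nN [uN Nx]]].
  have Ux := key_lemma lQr lQt nN uN Nx.
  exists (Ule (leP alpha)); split; first exact: Ule_normal.
  split; first by move=> y; apply: Ule_unip.
  rewrite /Ule -bd1 -bdB => a b'.
  case: (mxtens_indexP a) => k1 s; case: (mxtens_indexP b') => k2 r.
  rewrite bdE; case: (eqVneq k1 k2) => [<-|]; last by rewrite mul0r eqxx.
  rewrite mul1r => /Ux /andP [c nc].
  have nb : beta alpha s != beta alpha r by apply: contraNneq nc => e; rewrite /leQ e; exact: cle_refl.
  have := Cond _ _ (betaI s) (betaI r) nb k1.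
  move/forallP: c => /(_ k1); rewrite /ltr /leP -!betaE => c1 c2.
  by rewrite c1 /= -ltnNge ltn_neqAle c1 andbT.
move=> T q b [binc bI].
have ble : forall j j' : 'I_q, (j <= j')%N -> cle (b j) (b j').
  move=> j j'; rewrite leq_eqVlt => /orP [/eqP e|lt]; last by case: (binc _ _ lt).
  by rewrite (val_inj e); exact: cle_refl.
have bpos : forall r, exists j, beta alpha r = b j by move=> r; apply/bI.
have keyset : forall r (j : 'I_q), cle (beta alpha r) (b j) =
    [exists j' : 'I_q, (j' <= j)%N && (beta alpha r == b j')].
  move=> r j; apply/idP/existsP.
    have [j'' e] := bpos r; rewrite e => c; exists j''; rewrite eqxx andbT.
    rewrite leqNgt; apply/negP => lt; have [c1 ne] := binc _ _ lt.
    by move: ne; rewrite (cle_anti c1 c) eqxx.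
  by case=> j' /andP [le /eqP ->]; apply: ble.
have fv : in_flag_variety (dim_j alpha b) (flag_beta R[i] alpha b).
  split.
    move=> j _; rewrite /flag_beta rank_cspan /dim_j; apply: eq_card => r.
    by rewrite !inE -keyset.
  move=> j j' /andP [jj' _]; rewrite /flag_beta; apply/sub_coord_spanP => u v nP; rewrite mxE.
  case Pu: (cle (beta alpha u) (b j)) => //=; case: eqP => // e; exfalso; move: nP.
  by rewrite -e (cle_trans Pu (ble _ _ jj')).
split.
  move=> x; rewrite eQ; split.
    case=> ux U; split=> // j _; apply/(stabP _ ux) => i k Pi nPk; apply/eqP.
    by apply: contraNT nPk => nz; exact: cle_trans (U _ _ nz) Pi.
  case=> ux H; split=> // k i nz.
  have [j0 e0] := bpos i.
  case: (ltnP j0 q.-1) => h.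
    have /(stabP _ ux) S := H j0 h.
    apply: contraTT nz => nl; rewrite negbK; apply/eqP; apply: (S i k).
      by rewrite e0; exact: cle_refl.
    by rewrite -e0.
  have [j1 e1] := bpos k; rewrite /leQ e0 e1; apply: ble.
  rewrite -ltnS; apply: leq_trans (ltn_ord j1) _.
  by rewrite -{1}(ltn_predK (ltn_ord j0)) ltnS.
split=> // Fl [rk inc].
have [j0 _] := bpos (Ordinal hm).
pose K := q.-1.
pose C1 n := flag_beta R[i] alpha b (insubd j0 n).
pose C2 n := Fl (insubd j0 n).
have vK : forall n, (n < K)%N -> val (insubd j0 n : 'I_q) = n.
  move=> n nK; apply: insubdK; apply: leq_trans nK _; exact: leq_pred.
have [rk1 inc1] := fv.
have m1 : forall j j', (j <= j')%N -> (j' < K)%N -> (C1 j <= C1 j')%MS.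
  move=> j j' jj' jK; apply: inc1; rewrite !vK //; last exact: leq_ltn_trans jj' jK.
  by rewrite jj'.
have m2 : forall j j', (j <= j')%N -> (j' < K)%N -> (C2 j <= C2 j')%MS.
  move=> j j' jj' jK; apply: inc; rewrite !vK //; last exact: leq_ltn_trans jj' jK.
  by rewrite jj'.
have [E1 [uE1 H1]] := adapted m1.
have [E2 [uE2 H2]] := adapted m2.
exists (invmx E1 *m E2)^T; split.
  by rewrite unitmx_tr unitmx_mul unitmx_inv uE1 uE2.
move=> j jK; rewrite trmxK.
have e1 : C1 j = flag_beta R[i] alpha b j by rewrite /C1 valKd.
have e2 : C2 j = Fl j by rewrite /C2 valKd.
have hr : \rank (C1 j) = \rank (C2 j) by rewrite e1 e2 rk1 // rk.
move: (H1 j jK) (H2 j jK); rewrite hr e1 e2 => /eqmxP h1 /eqmxP h2.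
apply/eqmxP; apply: eqmx_trans h2; apply: eqmx_trans (eqmxMr _ (eqmx_sym h1)) _.
by rewrite mulmxA mulmxK.
Qed.
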